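(* Let $L$ be any infinite context-free language over an alphabet $\Sigma$ with $|\Sigma|\geq 2$. Then there is a positive integer $m$ satisfying the following. Let $n\geq 2$ be an integer, let $S\subseteq L\cap\Sigma^n$, and let $j_0,k\in\{2,\ldots,n\}$ be indices such that $k\geq 2j_0$ and $|S_{i,u}|<|S|/\big(m(k-j_0+1)(n-j_0+1)\big)$ for every index $i\in\{1,\ldots,n-j_0\}$ and every string $u\in\Sigma^{j_0}$. Then there exist indices $i\in\{1,\ldots,n\}$ and $j\in\{j_0,\ldots,k\}$ with $i+j\leq n$, and two strings $x=x_1x_2x_3$ and $y=y_1y_2y_3$ in $S$ with $|x_1|=|y_1|=i$, $|x_2|=|y_2|=j$ and $|x_3|=|y_3|$, such that (i) $x_2\neq y_2$, (ii) $x_1y_2x_3\in L$, and (iii) $y_1x_2y_3\in L$.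
   Context: $\Sigma^n$ denotes the set of strings of length exactly $n$ over $\Sigma$. For a string $x$ of length $n$ and indices $0\leq i\leq j\leq n$, $\mathrm{midd}_{i,j}(x)$ is the string obtained from $x$ by deleting its first $i$ symbols and its last $n-j$ symbols (so it has length $j-i$). For a fixed $S\subseteq\Sigma^n$, an index $i$ and a string $u\in\Sigma^{j}$ with $i+j\leq n$, $S_{i,u}=\{x\in S\mid u=\mathrm{midd}_{i,i+j}(x)\}$. *)

(* Defs.v *)
From mathcomp Require Import all_boot all_order all_algebra.
Set Implicit Arguments. Unset Strict Implicit. Unset Printing Implicit Defensive.

Section CFG.
Variable Sigma : finType.

Definition sym (N : finType) := (N + Sigma)%type.

Definition cfg_step (N : finType) (R : seq (N * seq (sym N)))
  (u v : seq (sym N)) : Prop :=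
  exists (a b : seq (sym N)) (A : N) (rhs : seq (sym N)),
    (A, rhs) \in R /\ u = a ++ inl A :: b /\ v = a ++ rhs ++ b.

Inductive cfg_derives (N : finType) (R : seq (N * seq (sym N)))
  : seq (sym N) -> seq (sym N) -> Prop :=
| cfg_refl u : cfg_derives R u u
| cfg_trans u v w : cfg_step R u v -> cfg_derives R v w -> cfg_derives R u w.

Definition context_free (L : seq Sigma -> Prop) : Prop :=
  exists (N : finType) (S0 : N) (R : seq (N * seq (sym N))),
    forall w : seq Sigma, L w <-> cfg_derives R [:: inl S0] (map inr w).

Definition infinite_lang (L : seq Sigma -> Prop) : Prop :=
  ~ exists s : seq (seq Sigma), forall w, L w -> w \in s.

Definition midd (i j : nat) (x : seq Sigma) : seq Sigma := drop i (take j x).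

Definition Siu (n : nat) (S : {set n.-tuple Sigma}) (i : nat) (u : seq Sigma)
  : {set n.-tuple Sigma} :=
  [set x in S | u == midd i (i + size u) x].
End CFG.

(* Main.v *)
Require Import Defs.
From mathcomp Require Import all_boot all_order all_algebra zify.
From Stdlib Require Import ClassicalEpsilon.
Set Implicit Arguments. Unset Strict Implicit. Unset Printing Implicit Defensive.
Import GRing.Theory Num.Theory.

Section Gram.
Variables (Sigma N : finType) (R : seq (N * seq (sym Sigma N))).
Local Notation symb := (sym Sigma N).

Inductive der : symb -> seq Sigma -> Prop :=
| der_t a : der (inr a) [:: a]
| der_n A (ch : seq (symb * seq Sigma)) : (A, map fst ch) \in R ->
   (forall p, p \in ch -> der p.1 p.2) -> der (inl A) (flatten (map snd ch)).

Definition dersL (al : seq symb) (w : seq Sigma) : Prop :=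
  exists ch : seq (symb * seq Sigma), [/\ map fst ch = al,
     flatten (map snd ch) = w & forall p, p \in ch -> der p.1 p.2].

Lemma dersL_cat a b w1 w2 : dersL a w1 -> dersL b w2 -> dersL (a ++ b) (w1 ++ w2).
Proof.
case=> c1 [h1 h2 h3] [c2 [g1 g2 g3]]; exists (c1 ++ c2); split.
- by rewrite map_cat h1 g1.
- by rewrite map_cat flatten_cat h2 g2.
- by move=> p; rewrite mem_cat => /orP[]; [apply: h3|apply: g3].
Qed.

Lemma dersL_catP a b w : dersL (a ++ b) w ->
  exists w1 w2, [/\ w = w1 ++ w2, dersL a w1 & dersL b w2].
Proof.
case=> c [h1 h2 h3].
have hs : size a <= size c by rewrite -(size_map fst) h1 size_cat leq_addr.
exists (flatten (map snd (take (size a) c))), (flatten (map snd (drop (size a) c))).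
split.
- by rewrite -flatten_cat -map_cat cat_take_drop h2.
- exists (take (size a) c); split => //.
  + by rewrite map_take h1 take_size_cat.
  + by move=> p /mem_take; apply: h3.
- exists (drop (size a) c); split => //.
  + by rewrite map_drop h1 drop_size_cat.
  + by move=> p /mem_drop; apply: h3.
Qed.

Lemma dersL1 s w : der s w -> dersL [:: s] w.
Proof. by move=> h; exists [:: (s, w)]; split; rewrite //= ?cats0 // => p; rewrite inE => /eqP ->. Qed.

Lemma dersL1P s w : dersL [:: s] w -> der s w.
Proof.
case=> [[|[s' w'] [|? ?]]] [] //= [<-]; rewrite cats0 => <- h.
by apply: (h (s', w')); rewrite inE.
Qed.

Lemma dersL_nil : dersL [::] [::].
Proof. by exists [::]. Qed.

Lemma dersL_terms w : dersL (map inr w) w.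
Proof.
elim: w => [|a w IH]; first exact: dersL_nil.
by have := dersL_cat (dersL1 (der_t a)) IH.
Qed.

Lemma step_back u v w : cfg_step R u v -> dersL v w -> dersL u w.
Proof.
case=> a [b [A [rhs [hR [-> ->]]]]] h.
case: (dersL_catP h) => w1 [w23 [-> h1 h23]].
case: (dersL_catP h23) => w2 [w3 [-> [c [c1 c2 c3]] h3]].
apply: dersL_cat => //.
have -> : inl A :: b = [:: inl A] ++ b by [].
apply: dersL_cat => //; apply: dersL1.
rewrite -c2; apply: der_n => //; by rewrite c1.
Qed.

Lemma derives_back u v w : cfg_derives R u v -> dersL v w -> dersL u w.
Proof.
elim=> [//|u1 v1 w1 hs _ IH] h; apply: (step_back hs); exact: IH.
Qed.

Lemma derives_trans u v w : cfg_derives R u v -> cfg_derives R v w -> cfg_derives R u w.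
Proof. by elim=> [//|u1 v1 w1 hs _ IH] h; apply: cfg_trans hs (IH h). Qed.

Lemma derives_ctx a b u v : cfg_derives R u v -> cfg_derives R (a ++ u ++ b) (a ++ v ++ b).
Proof.
elim=> [u1|u1 v1 w1 [a' [b' [A [rhs [hR [-> ->]]]]]] _ IH]; first exact: cfg_refl.
apply: cfg_trans IH; exists (a ++ a'), (b' ++ b), A, rhs; split => //.
- by rewrite -!catA.
Qed.

Lemma derives_cat u u' v v' : cfg_derives R u u' -> cfg_derives R v v' ->
  cfg_derives R (u ++ v) (u' ++ v').
Proof.
move=> h1 h2; apply: (@derives_trans _ (u' ++ v)).
- exact: (derives_ctx [::] v h1).
- by have := derives_ctx u' [::] h2; rewrite !cats0.
Qed.

Lemma der_forward s w : der s w -> cfg_derives R [:: s] (map inr w).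
Proof.
elim=> [a|A ch hR _ IH]; first exact: cfg_refl.
apply: (@cfg_trans _ _ _ _ (map fst ch)).
  by exists [::], [::], A, (map fst ch); rewrite cats0.
elim: ch {hR} IH => [|p ch IHc] IH; first exact: cfg_refl.
rewrite /= map_cat.
have -> : p.1 :: map fst ch = [:: p.1] ++ map fst ch by [].
apply: derives_cat; first by apply: IH; rewrite inE eqxx.
by apply: IHc => q hq; apply: IH; rewrite inE hq orbT.
Qed.

Lemma der_iff S0 w : cfg_derives R [:: inl S0] (map inr w) <-> der (inl S0) w.
Proof.
split; last exact: der_forward.
by move=> h; apply: dersL1P; apply: (derives_back h); apply: dersL_terms.
Qed.
End Gram.

Lemma pigeon (T C : finType) (S : {set T}) (Q : C -> T -> bool) :
  (forall x, x \in S -> exists c, Q c x) ->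
  0 < #|S| -> exists c, #|S| <= #|C| * #|[set x in S | Q c x]|.
Proof.
move=> hS hS0.
have hC : 0 < #|C|.
  case/card_gt0P: hS0 => x /hS [c _]; apply/card_gt0P; by exists c.
have [c0 hc0] := eq_bigmax (fun c => #|[set x in S | Q c x]|) hC.
exists c0; rewrite -hc0.
have hF : forall c, \sum_(x in S) (Q c x : nat) = #|[set x in S | Q c x]|.
  move=> c; rewrite -sum1_card.
  rewrite [RHS](eq_bigl (fun x => (x \in S) && Q c x)); last by move=> x; rewrite inE.
  by rewrite big_mkcondr /=; apply: eq_bigr => x _; case: (Q c x).
apply: (@leq_trans (\sum_c #|[set x in S | Q c x]|)).
  rewrite -sum1_card.
  apply: (@leq_trans (\sum_(x in S) \sum_c (Q c x : nat))).
    apply: leq_sum => x /hS [c hc]; rewrite (bigD1 c) //= hc add1n ltnS leq0n //.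
  by rewrite exchange_big /=; apply: leq_sum => c _; rewrite hF.
apply: (@leq_trans (\sum_(c : C) \max_c #|[set x in S | Q c x]|)).
  by apply: leq_sum => c _; apply: leq_bigmax.
by rewrite sum_nat_const.
Qed.

Section Comb.
Variables (Sigma N : finType) (R : seq (N * seq (sym Sigma N))) (S0 : N).
Variables (n j0 k : nat).
Hypotheses (hj0 : 2 <= j0) (hk : 2 * j0 <= k) (hkn : k <= n).
Local Notation symb := (sym Sigma N).
Local Notation Lg w := (der R (inl S0) w).
Local Notation dersL := (dersL R).

Definition keys : seq (seq symb) :=
  flatten [seq [seq take q (drop p r.2) | p <- iota 0 (size r.2).+1,
                                          q <- iota 0 (size r.2).+1] | r <- R].

Lemma key_in A rhs p q : (A, rhs) \in R -> take q (drop p rhs) \in keys.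
Proof.
move=> hR; apply/flattenP.
exists [seq take q (drop p rhs) | p <- iota 0 (size rhs).+1, q <- iota 0 (size rhs).+1].
  by apply/mapP; exists (A, rhs).
have -> : take q (drop p rhs) =
  take (minn q (size rhs)) (drop (minn p (size rhs)) rhs).
  have -> : drop p rhs = drop (minn p (size rhs)) rhs.
    case: (leqP p (size rhs)) => h //.
    by rewrite drop_size drop_oversize // ltnW.
  case: (leqP q (size rhs)) => h //.
  rewrite !take_oversize //.
    by rewrite size_drop leq_subr.
  by rewrite size_drop (leq_trans (leq_subr _ _)) // ltnW.
apply: (allpairs_f (fun p q => take q (drop p rhs))); rewrite mem_iota /= add0n ltnS geq_minr //.
Qed.

Definition Good (b : bool) (al : seq symb) (i j : nat) (x : seq Sigma) : Prop :=
  [/\ al \in keys, 1 <= i, j0 <= j <= k, i + j <= n &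
   if b then dersL al (midd i (i + j) x) /\
             (forall v, dersL al v -> Lg (take i x ++ v ++ drop (i + j) x))
   else [/\ i + j = n, dersL al (take i x) &
             forall v, dersL al v -> Lg (v ++ drop i x)]].

Definition Result x := exists b al i j, Good b al i j x.

Lemma Mres al c1 w c3 : 1 <= size c1 -> j0 <= size w <= k ->
  size (c1 ++ w ++ c3) = n -> al \in keys -> dersL al w ->
  (forall v, dersL al v -> Lg (c1 ++ v ++ c3)) -> Result (c1 ++ w ++ c3).
Proof.
move=> h1 hw hsz hk' hd hc; exists true, al, (size c1), (size w).
have ht : take (size c1) (c1 ++ w ++ c3) = c1 by rewrite take_size_cat.
have hd2 : drop (size c1 + size w) (c1 ++ w ++ c3) = c3.
  by rewrite catA drop_size_cat // size_cat.
have hm : midd (size c1) (size c1 + size w) (c1 ++ w ++ c3) = w.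
  by rewrite /midd catA -(size_cat c1 w) take_size_cat // drop_size_cat.
split => //; first by rewrite -hsz !size_cat addnA leq_addr.
by rewrite hm ht hd2.
Qed.

Lemma Pres al w c3 : 1 <= size w -> j0 <= size c3 <= k ->
  size (w ++ c3) = n -> al \in keys -> dersL al w ->
  (forall v, dersL al v -> Lg (v ++ c3)) -> Result (w ++ c3).
Proof.
move=> h1 hw hsz hk' hd hc; exists false, al, (size w), (size c3).
rewrite /Good take_size_cat // drop_size_cat //.
by split => //; rewrite -size_cat hsz.
Qed.

Lemma ctx_of c1 c3 (ch : seq (symb * seq Sigma)) :
  (forall ch', map fst ch' = map fst ch -> (forall p, p \in ch' -> der R p.1 p.2) ->
     Lg (c1 ++ flatten (map snd ch') ++ c3)) ->
  forall v, dersL (map fst ch) v -> Lg (c1 ++ v ++ c3).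
Proof. by move=> hc v [ch' [h1 <- h3]]; apply: hc. Qed.

Lemma seg (ch : seq (symb * seq Sigma)) : forall c1 c3, 1 <= size c1 ->
  size (c1 ++ flatten (map snd ch) ++ c3) = n ->
  (forall p q, take q (drop p (map fst ch)) \in keys) ->
  (forall p, p \in ch -> der R p.1 p.2) ->
  (forall ch', map fst ch' = map fst ch -> (forall p, p \in ch' -> der R p.1 p.2) ->
     Lg (c1 ++ flatten (map snd ch') ++ c3)) ->
  (forall p, p \in ch -> k <= size p.2 -> forall c1' c3', 1 <= size c1' ->
     size (c1' ++ p.2 ++ c3') = n -> (forall v, der R p.1 v -> Lg (c1' ++ v ++ c3')) ->
     Result (c1' ++ p.2 ++ c3')) ->
  j0 <= size (flatten (map snd ch)) -> Result (c1 ++ flatten (map snd ch) ++ c3).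
Proof.
elim: ch => [|p ch IH] c1 c3 h1 hsz hkey hder hctx hnode htot.
  by move: htot; rewrite /= leqNgt (leq_trans _ hj0).
rewrite /= in hsz htot *.
set rest := flatten (map snd ch) in hsz htot *.
have hp : p \in p :: ch by rewrite inE eqxx.
have hctxp : forall v, der R p.1 v -> Lg (c1 ++ v ++ rest ++ c3).
  move=> v hv; rewrite catA -catA.
  have := hctx ((p.1, v) :: ch) erefl.
  rewrite /= -catA; apply => q; rewrite inE => /orP[/eqP -> //|hq].
  by apply: hder; rewrite inE hq orbT.
case: (leqP k (size p.2)) => hpk.
  by rewrite -[(p.2 ++ rest) ++ c3]catA; apply: hnode => //; move: hsz; rewrite !size_cat !addnA.
case: (leqP j0 (size p.2)) => hpj.
  rewrite -[(p.2 ++ rest) ++ c3]catA; apply: Mres => //.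
  - by rewrite hpj ltnW.
  - move: hsz; rewrite !size_cat; lia.
  - exact: (hkey 0 1).
  - rewrite drop0 /= take0; exact: (dersL1 (hder _ hp)).
  - by rewrite drop0 /= take0 => v hv; apply: hctxp; apply: dersL1P; exact: hv.
case: (leqP j0 (size rest)) => hrj.
  rewrite -[(p.2 ++ rest) ++ c3]catA catA; apply: IH => //.
  - by rewrite size_cat (leq_trans h1) // leq_addr.
  - by rewrite -hsz !size_cat !addnA.
  - by move=> a b; exact: (hkey a.+1 b).
  - by move=> q hq; apply: hder; rewrite inE hq orbT.
  - move=> ch' h' hd'; rewrite -[(c1 ++ p.2) ++ _]catA.
    have := hctx (p :: ch'); rewrite /= -[(p.2 ++ _) ++ c3]catA; apply; first by rewrite h'.
    by move=> q; rewrite inE => /orP[/eqP ->|/hd'] //; apply: hder.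
  - by move=> q hq; apply: hnode; rewrite inE hq orbT.
apply: (@Mres (map fst (p :: ch))) => //.
- by move: htot; rewrite !size_cat; lia.
- by move: (hkey 0 (size (map fst (p :: ch)))); rewrite drop0 take_size.
- exists (p :: ch); split => //.
- exact: (ctx_of hctx).
Qed.

Lemma node s w : der R s w -> forall c1 c3, 1 <= size c1 ->
  size (c1 ++ w ++ c3) = n -> k <= size w ->
  (forall v, der R s v -> Lg (c1 ++ v ++ c3)) -> Result (c1 ++ w ++ c3).
Proof.
elim=> [a|A ch hR hder IH] c1 c3 h1 hsz hkw hctx.
  by move: hkw; rewrite /= leqNgt (leq_trans _ hk) // mul2n -addnn (leq_trans hj0) // leq_addr.
apply: seg => //.
- by move=> p q; apply: key_in hR.
- by move=> ch' h' hd'; apply: hctx; apply: der_n => //; rewrite h'.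
- by move=> p hp hkp c1' c3' a b c; apply: (IH p hp c1' c3' a b hkp c).
- by rewrite (leq_trans _ hkw) // (leq_trans _ hk) // mul2n -addnn leq_addr.
Qed.

Lemma split_first (ch : seq (symb * seq Sigma)) : flatten (map snd ch) != [::] ->
  exists e p post, [/\ ch = e ++ p :: post, flatten (map snd e) = [::] & p.2 != [::]].
Proof.
elim: ch => [|p ch IH] //=.
case: (eqVneq p.2 [::]) => hp.
  rewrite hp /= => /IH [e [q [post [-> he hq]]]].
  by exists (p :: e), q, post; rewrite /= hp he.
by move=> _; exists [::], p, ch.
Qed.

Lemma spine s w : der R s w -> forall c3, size (w ++ c3) = n -> size c3 < j0 ->
  (forall v, der R s v -> Lg (v ++ c3)) -> Result (w ++ c3).
Proof.
have h2j : j0.+1 < n.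
  by lia.
elim=> [a|A ch hR hder IH] c3 hsz hc3 hctx.
  by move: hsz h2j hc3; rewrite size_cat /=; lia.
have hne : flatten (map snd ch) != [::].
  apply/eqP => h; move: hsz; rewrite h /= => hsz.
  by move: h2j hc3; rewrite -hsz; lia.
case: (split_first hne) => e [p [post [hch he hp]]].
have hfl : flatten (map snd ch) = p.2 ++ flatten (map snd post).
  by rewrite hch map_cat flatten_cat he.
have hmf : map fst ch = map fst e ++ p.1 :: map fst post by rewrite hch map_cat.
have hmem : forall q, q \in ch -> der R q.1 q.2 := hder.
have hpin : p \in ch by rewrite hch mem_cat inE eqxx orbT.
rewrite hfl in hsz *.
set rest := flatten (map snd post) in hsz *.
have hmk : forall (e' : seq (symb * seq Sigma)) q post',
   map fst e' = map fst e -> q.1 = p.1 -> map fst post' = map fst post ->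
   (forall r, r \in e' ++ q :: post' -> der R r.1 r.2) ->
   Lg (flatten (map snd e') ++ q.2 ++ flatten (map snd post') ++ c3).
  move=> e' q post' h1 h2 h3 hd.
  have hd' : der R (inl A) (flatten (map snd (e' ++ q :: post'))).
    by apply: der_n => //; rewrite map_cat /= h1 h2 h3 -hmf.
  by move: (hctx _ hd'); rewrite map_cat flatten_cat /= -!catA.
case: (leqP j0 (size rest)) => hrj.
  rewrite -catA; apply: seg => //.
  - by rewrite lt0n size_eq0.
  - by rewrite -hsz !size_cat addnA.
  - have hdr : drop (size e).+1 (map fst ch) = map fst post.
      by rewrite hmf -cat_rcons drop_size_cat // size_rcons size_map.
    by move=> a b; have := key_in (a + (size e).+1) b hR; rewrite -drop_drop hdr.
  - by move=> q hq; apply: hmem; rewrite hch mem_cat inE hq !orbT.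
  - move=> ch' h' hd'; have := hmk e p ch' erefl erefl h'.
    rewrite he; apply => r; rewrite mem_cat inE => /or3P[hr|/eqP->|hr].
    + by apply: hmem; rewrite hch mem_cat hr.
    + exact: hmem.
    + exact: hd'.
  - move=> q hq hkq c1' c3' h1' hsz' hc'.
    have hq' : q \in ch by rewrite hch mem_cat inE hq !orbT.
    exact: (node (hmem q hq') h1' hsz' hkq hc').
case: (leqP j0 (size (rest ++ c3))) => hrc.
  rewrite -catA; apply: (@Pres (map fst (e ++ [:: p]))) => //.
  - by rewrite lt0n size_eq0.
  - by move: hrc; rewrite !size_cat; lia.
  - by rewrite catA.
  - have := key_in 0 (size e).+1 hR.
    by rewrite drop0 hmf -cat_rcons take_size_cat ?size_rcons ?size_map // map_cat cats1.
  - exists (e ++ [:: p]); split => //.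
      by rewrite map_cat flatten_cat he /= cats0.
    by move=> q; rewrite mem_cat inE => /orP[hq|/eqP->]; apply: hmem;
       rewrite // hch mem_cat hq.
  - move=> v [chv [h1 <- h3]].
    rewrite map_cat in h1.
    have hs : size chv = size e + 1.
      by rewrite -(size_map fst) h1 size_cat size_map.
    rewrite -(cat_take_drop (size e) chv) in h1 h3 *.
    have [ha hb] : map fst (take (size e) chv) = map fst e /\
                   map fst (drop (size e) chv) = [:: p.1].
      move: h1; rewrite map_cat => /eqP; rewrite eqseq_cat ?size_map ?size_take ?hs ?addn1 ?ltnS ?leqnn //.
      by case/andP => /eqP -> /eqP ->.
    case hd: (drop (size e) chv) hb => [|q [|? ?]] //= [hq].
    rewrite map_cat flatten_cat /= cats0 -catA.
    have := hmk (take (size e) chv) q post ha hq erefl; apply.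
    move=> r; rewrite mem_cat inE => /or3P[hr|/eqP->|hr].
    + by apply: h3; rewrite hd mem_cat hr.
    + by apply: h3; rewrite hd mem_cat inE eqxx orbT.
    + by apply: hmem; rewrite hch mem_cat inE hr !orbT.
rewrite -catA; apply: (IH p hpin) => //.
- by rewrite catA.
- move=> v hv; have := hmk e (p.1, v) post erefl erefl erefl.
  rewrite he; apply => r; rewrite mem_cat inE => /or3P[hr|/eqP->|hr] //.
  + by apply: hmem; rewrite hch mem_cat hr.
  + by apply: hmem; rewrite hch mem_cat inE hr !orbT.
Qed.

Lemma exists_good x : size x = n -> Lg x -> Result x.
Proof.
move=> hx hL; rewrite -[x]cats0; apply: (spine hL) => //.
- by rewrite cats0.
- exact: leq_trans hj0.
- by move=> v; rewrite cats0.
Qed.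

Lemma swap b al i j x y : size x = n -> size y = n -> Good b al i j x ->
  Good b al i j y -> Lg (take i x ++ midd i (i + j) y ++ drop (i + j) x).
Proof.
move=> hx hy [_ _ _ _ gx] [_ _ _ _ gy]; case: b gx gy => [[_ hx2] [hy1 _]|[hn hx1 hx2] [_ hy1 hy2]].
  exact: hx2.
rewrite hn drop_oversize ?hx // cats0 /midd.
have -> : take n y = y by rewrite take_oversize ?hy.
exact: hy2.
Qed.
End Comb.

Lemma decomp (T : finType) (x : seq T) i j :
  take i x ++ midd i (i + j) x ++ drop (i + j) x = x.
Proof.
rewrite /midd -{1}(take_takel _ (leq_addr j i)) catA cat_take_drop.
exact: cat_take_drop.
Qed.

Lemma size_midd (T : finType) (x : seq T) i j : i + j <= size x -> size (midd i (i + j) x) = j.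
Proof. by move=> h; rewrite /midd size_drop size_takel // addKn. Qed.

Lemma midd_prefix (T : finType) (x : seq T) i j j' : j' <= j ->
  midd i (i + j') x = take j' (midd i (i + j) x).
Proof.
move=> h; rewrite /midd take_drop take_takel; first by rewrite addnC.
by rewrite addnC leq_add2l.
Qed.

Lemma ratlt (a b d : nat) : 0 < d -> ((a%:R : rat) < b%:R / d%:R)%R -> a * d < b.
Proof. by move=> hd; rewrite ltr_pdivlMr ?ltr0n // -natrM ltr_nat. Qed.

Local Open Scope ring_scope.
Unset Implicit Arguments.

Theorem lemma4p1 (Sigma : finType) (L : seq Sigma -> Prop) :
  (2 <= #|Sigma|)%N -> context_free L -> infinite_lang L ->
  exists m : nat, (0 < m)%N /\
  forall (n : nat) (S : {set n.-tuple Sigma}) (j0 k : nat),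
    (2 <= n)%N ->
    (forall x : n.-tuple Sigma, x \in S -> L (val x)) ->
    (2 <= j0 <= n)%N -> (2 <= k <= n)%N -> (2 * j0 <= k)%N ->
    (forall (i : nat) (u : seq Sigma), (1 <= i <= n - j0)%N -> size u = j0 ->
       (#|Siu S i u|%:R : rat) <
       #|S|%:R / (m * (k - j0 + 1) * (n - j0 + 1))%N%:R) ->
    exists (i j : nat) (x y : n.-tuple Sigma)
           (x1 x2 x3 y1 y2 y3 : seq Sigma),
      [/\ (1 <= i <= n)%N, (j0 <= j <= k)%N, (i + j <= n)%N,
          x \in S & y \in S] /\
      [/\ val x = x1 ++ x2 ++ x3, val y = y1 ++ y2 ++ y3,
          size x1 = i /\ size y1 = i, size x2 = j /\ size y2 = j
        & size x3 = size y3] /\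
      [/\ x2 != y2, L (x1 ++ y2 ++ x3) & L (y1 ++ x2 ++ y3)].
Proof.
move=> hSig [N [S0 [R hL]]] _.
set K := size (keys R).
exists (2 * K).+1%N; split => //.
move=> n S j0 k hn hSL /andP[hj0 hj0n] /andP[hk2 hkn] hk hh.
set D := ((2 * K).+1 * (k - j0 + 1) * (n - j0 + 1))%N.
have hD : (0 < D)%N by rewrite /D !muln_gt0 !addn1.
have hnat : forall i u, (1 <= i <= n - j0)%N -> size u = j0 ->
    (#|Siu S i u| * D < #|S|)%N.
  by move=> i u hi hu; apply: ratlt => //; apply: hh.
have hLg : forall x : n.-tuple Sigma, x \in S -> der R (inl S0) (val x).
  by move=> x hx; apply/der_iff/hL/hSL.
have hS0 : (0 < #|S|)%N.
  have [a _] : exists a : Sigma, a \in Sigma.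
    by apply/card_gt0P; apply: leq_trans hSig.
  have := hnat 1%N (nseq j0 a); rewrite size_nseq => /(_ _ erefl).
  have h1 : (1 <= 1 <= n - j0)%N by apply/andP; split => //; lia.
  by move/(_ h1) => h; apply: leq_ltn_trans h.
pose C := (bool * 'I_K * 'I_(n - j0) * 'I_(k - j0).+1)%type.
pose G (c : C) (x : n.-tuple Sigma) :=
  Good R S0 n j0 k c.1.1.1 (nth [::] (keys R) c.1.1.2) (c.1.2 + 1)%N (c.2 + j0)%N (val x).
pose Q (c : C) x := if excluded_middle_informative (G c x) then true else false.
have hQ : forall c x, Q c x -> G c x.
  by move=> c x; rewrite /Q; case: excluded_middle_informative.
have hcov : forall x, x \in S -> exists c, Q c x.
  move=> x hx.
  have [b [al [i [j hG]]]] := exists_good hj0 hk hkn (size_tuple x) (hLg x hx).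
  have [hal hi1 /andP[hj1 hj2] hij _] := hG.
  have hidx : (index al (keys R) < K)%N by rewrite index_mem.
  have hi' : (i.-1 < n - j0)%N by lia.
  have hj' : (j - j0 < (k - j0).+1)%N by lia.
  exists (b, Ordinal hidx, Ordinal hi', Ordinal hj').
  rewrite /Q; case: excluded_middle_informative => // []; rewrite /G /=.
  rewrite nth_index // addn1 prednK // subnK //.
have [[[[b idx] io] jo] hc] := pigeon hcov hS0.
set F := [set x in S | Q _ x] in hc.
have hcard : #|{: bool * 'I_K * 'I_(n - j0) * 'I_(k - j0).+1}| = (2 * K * (n - j0) * (k - j0).+1)%N.
  by rewrite !card_prod card_bool !card_ord.
set i := (io + 1)%N; set j := (jo + j0)%N; set al := nth [::] (keys R) idx.
have hFG : forall x, x \in F -> x \in S /\ Good R S0 n j0 k b al i j (val x).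
  by move=> x; rewrite inE => /andP[hx /hQ hG].
case: (boolP [exists x in F, exists y in F, midd i (i + j) x != midd i (i + j) y]).
  case/exists_inP => x hxF /exists_inP [y hyF hne].
  have [hxS hGx] := hFG x hxF; have [hyS hGy] := hFG y hyF.
  have [_ hi1 hjr hij _] := hGx.
  exists i, j, x, y, (take i x), (midd i (i + j) x), (drop (i + j) x),
    (take i y), (midd i (i + j) y), (drop (i + j) y).
  have hxs := size_tuple x; have hys := size_tuple y.
  split; [|split].
  - split => //; apply/andP; split => //; lia.
  - split; [by rewrite decomp|by rewrite decomp| | |].
    + by rewrite !size_takel ?hxs ?hys //; lia.
    + by rewrite !size_midd ?hxs ?hys.
    + by rewrite !size_drop hxs hys.
  - split => //.
    + by apply/hL/der_iff; apply: (swap hxs hys hGx hGy).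
    + by apply/hL/der_iff; apply: (swap hys hxs hGy hGx).
rewrite negb_exists_in => /forall_inP hall.
have hF0 : (0 < #|F|)%N.
  rewrite lt0n; apply/negP => /eqP h0; move: hc; rewrite h0 muln0 leqn0 => /eqP h; by rewrite h in hS0.
case/card_gt0P: hF0 => x0 hx0F.
have [hx0S hG0] := hFG x0 hx0F.
have [_ hi1 /andP[hj1 hj2] hij _] := hG0.
set u := midd i (i + j0) x0.
have hu : size u = j0 by rewrite size_midd // size_tuple; lia.
have hsub : F \subset Siu S i u.
  apply/subsetP => x hxF; have [hxS _] := hFG x hxF.
  rewrite inE hxS /= hu /u !(midd_prefix _ _ hj1).
  have := hall x0 hx0F; rewrite negb_exists_in => /forall_inP /(_ x hxF).
  by rewrite negbK => /eqP ->.
have hlt := hnat i u (ltac:(apply/andP; split => //; lia)) hu.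
have hle := subset_leq_card hsub.
have hCD : (#|{: bool * 'I_K * 'I_(n - j0) * 'I_(k - j0).+1}| <= D)%N.
  rewrite hcard /D; nia.
have h := leq_trans hc (leq_mul hCD hle).
by move: hlt; rewrite mulnC ltnNge h.
Qed.
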